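(* Let $A\in\mathbb{R}^{n\times d}$ have rows $a_1^\top,\dots,a_n^\top$, let $f_1,\dots,f_n:\mathbb{R}\to\mathbb{R}$ be convex and $(1/\gamma)$-smooth ($\gamma>0$), let $g:\mathbb{R}^d\to\mathbb{R}\cup\{+\infty\}$ be closed and $\mu$-strongly convex ($\mu>0$), and let $\bar R=\max_i\|a_i\|_2$. Consider the iterates of the SDAPD method (described in the context) and the potential $\tilde\phi_t$ with $\tilde\phi_t^*=\min_x\tilde\phi_t(x)$. Fix $t\ge0$ and assume $\eta(1+B_{t-1}\mu)\ge\beta_t$. Then $$\mathbb{E}_{\mathcal{F}_t}\big[\tilde\phi_{t+1}^*-\tilde\phi_t^*\big]\ge\beta_t\,\mathbb{E}_{\mathcal{F}_t}\Big[g(\bar{x}^{t+1})+\frac1n\langle\bar{y}^{t+1},A\bar{x}^{t+1}\rangle\Big]-\frac{\bar R^2\beta_t\eta}{2}\mathbb{E}_{\mathcal{F}_t}\big[\|y^{t+1}-y^t\|_2^2\big].$$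
   Context: $f_i^*$ is the convex conjugate of $f_i$; $\operatorname{prox}_h(u)=\arg\min_v\{h(v)+\frac12\|v-u\|_2^2\}$. SDAPD method: given $x^0\in\mathbb{R}^d$, $y^0\in\mathbb{R}^n$, $\eta,\tau>0$, $\beta_t>0$, set $B_t=\sum_{k=0}^t\beta_k$ (with $B_{-1}=0$). For $t=0,1,\dots$: sample $i_t$ uniformly from $\{1,\dots,n\}$ independently of the past; $\bar{x}^{t+1}=\operatorname{prox}_{\eta g}(x^t-\frac{\eta}{n}A^\top y^t)$; $y^{t+1}_i=\operatorname{prox}_{\tau f_i^*}(y_i^t+\tau\langle a_i,\bar{x}^{t+1}\rangle)$ if $i=i_t$, $y^{t+1}_i=y^t_i$ otherwise; $\bar{y}^{t+1}=y^t+n(y^{t+1}-y^t)$; $x^{t+1}=\operatorname{prox}_{B_tg}(x^0-\sum_{k=0}^t\frac{\beta_k}{n}A^\top\bar{y}^{k+1})$. Potential: $\tilde\phi_t(x)=\frac12\|x-x^0\|_2^2+\sum_{k=0}^{t-1}\beta_k\big(g(x)+\frac1n\langle\bar{y}^{k+1},Ax\rangle\big)$. $\mathcal{F}_t$ is the $\sigma$-field generated by all random variables up to iteration $t$ (so $x^t,y^t$ are $\mathcal{F}_t$-measurable and $i_t$ is independent of $\mathcal{F}_t$), and $\mathbb{E}_{\mathcal{F}_t}$ denotes conditional expectation given $\mathcal{F}_t$. *)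

(* Defs.v *)
From HB Require Import structures.
From mathcomp Require Import all_boot all_order all_algebra.
From mathcomp Require Import all_classical all_reals all_analysis.
Set Implicit Arguments. Unset Strict Implicit. Unset Printing Implicit Defensive.
Import Order.TTheory GRing.Theory Num.Theory.
Local Open Scope classical_set_scope.
Local Open Scope ring_scope.

Section SDAPD.
Variable R : realType.

Definition dotv (m : nat) (u v : 'cV[R]_m) : R := \sum_(i < m) u i 0 * v i 0.
Definition sqnorm (m : nat) (u : 'cV[R]_m) : R := dotv u u.
Definition norm2 (m : nat) (u : 'cV[R]_m) : R := Num.sqrt (sqnorm u).

Definition convex_fun (f : R -> R) : Prop :=
  forall (x y l : R), 0 <= l -> l <= 1 ->
    f (l * x + (1 - l) * y) <= l * f x + (1 - l) * f y.

Definition smooth_fun (L : R) (f : R -> R) : Prop :=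
  (forall x : R, derivable f x 1) /\
  (forall x y : R, `| derive1 f x - derive1 f y | <= L * `| x - y |).

Definition ext_valued (d : nat) (g : 'cV[R]_d -> \bar R) : Prop :=
  forall x, g x != -oo%E.

Definition proper_fun (d : nat) (g : 'cV[R]_d -> \bar R) : Prop :=
  exists x, (g x < +oo)%E.

(* closed = lower semicontinuous = all sublevel sets closed (in R^d) *)
Definition closed_fun (d : nat) (g : 'cV[R]_d -> \bar R) : Prop :=
  forall a : R, closed ([set x : 'cV[R^o]_d | (g x <= a%:E)%E]).

Definition strongly_convex (d : nat) (mu : R) (g : 'cV[R]_d -> \bar R) : Prop :=
  forall (x y : 'cV[R]_d) (l : R), 0 <= l -> l <= 1 ->
    (g (l *: x + (1 - l) *: y)%R <=
      l%:E * g x + (1 - l)%:E * g y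
      - (mu / 2 * l * (1 - l) * sqnorm (x - y))%:E)%E.

Definition fconj (f : R -> R) (v : R) : \bar R :=
  ereal_sup [set ((v * x - f x)%:E) | x in [set: R]].

(* prox_{c h}(u) = argmin_v { c h(v) + 1/2 ||v - u||^2 }  (on R^m; the minimizer,
   which exists and is unique in all uses below) *)
Definition proxv (m : nat) (c : R) (h : 'cV[R]_m -> \bar R) (u : 'cV[R]_m)
  : 'cV[R]_m :=
  xget 0 [set v | forall w : 'cV[R]_m,
     (c%:E * h v + (sqnorm (v - u) / 2)%:E <=
      c%:E * h w + (sqnorm (w - u) / 2)%:E)%E].

Definition proxr (c : R) (h : R -> \bar R) (u : R) : R :=
  xget 0 [set v | forall w : R,
     (c%:E * h v + ((v - u) ^+ 2 / 2)%:E <=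
      c%:E * h w + ((w - u) ^+ 2 / 2)%:E)%E].

Variables (n d : nat) (A : 'M[R]_(n, d)) (f : 'I_n -> R -> R)
  (g : 'cV[R]_d -> \bar R) (eta tau : R) (beta : nat -> R)
  (x0 : 'cV[R]_d) (y0 : 'cV[R]_n).

(* Bsum t = beta_0 + ... + beta_{t-1} = B_{t-1}   (so B_t = Bsum t.+1, B_{-1} = 0) *)
Definition Bsum (t : nat) : R := \sum_(k < t) beta k.

Definition arow (i : 'I_n) : 'cV[R]_d := (row i A)^T.

Definition Rbar : R := \big[Num.max/0]_(i < n) norm2 (arow i).

(* One step, given the index i_t = i and the state (x^t, y^t, S_t) where
   S_t = sum_{k<t} beta_k ybar^{k+1}. *)
Definition xbar_of (xt : 'cV[R]_d) (yt : 'cV[R]_n) : 'cV[R]_d :=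
  proxv eta g (xt - (eta / n%:R) *: (A^T *m yt)).

Definition y_of (i : 'I_n) (xt : 'cV[R]_d) (yt : 'cV[R]_n) : 'cV[R]_n :=
  \col_j (if j == i then
            proxr tau (fconj (f i))
              (yt i 0 + tau * dotv (arow i) (xbar_of xt yt))
          else yt j 0).

Definition ybar_of (i : 'I_n) (xt : 'cV[R]_d) (yt : 'cV[R]_n) : 'cV[R]_n :=
  yt + n%:R *: (y_of i xt yt - yt).

(* state at iteration t: (x^t, y^t, S_t); depends on s 0, ..., s (t-1),
   where s k = i_k is the index sampled at iteration k *)
Fixpoint state (s : nat -> 'I_n) (t : nat) : 'cV[R]_d * 'cV[R]_n * 'cV[R]_n :=
  match t with
  | 0 => (x0, y0, 0)
  | t'.+1 =>
      let: (xt, yt, St) := state s t' in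
      let S' := St + beta t' *: ybar_of (s t') xt yt in
      (proxv (Bsum t'.+1) g (x0 - (n%:R)^-1 *: (A^T *m S')),
       y_of (s t') xt yt, S')
  end.

Definition x_it (s : nat -> 'I_n) (t : nat) : 'cV[R]_d := (state s t).1.1.
Definition y_it (s : nat -> 'I_n) (t : nat) : 'cV[R]_n := (state s t).1.2.

(* xbar^{t+1}, ybar^{t+1} *)
Definition xbar_it (s : nat -> 'I_n) (t : nat) : 'cV[R]_d :=
  xbar_of (x_it s t) (y_it s t).
Definition ybar_it (s : nat -> 'I_n) (t : nat) : 'cV[R]_n :=
  ybar_of (s t) (x_it s t) (y_it s t).

Definition phi (s : nat -> 'I_n) (t : nat) (x : 'cV[R]_d) : \bar R :=
  ((sqnorm (x - x0) / 2)%:E +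
   \sum_(k < t) (beta k)%:E * (g x + ((n%:R)^-1 * dotv (ybar_it s k) (A *m x))%:E))%E.

Definition phistar (s : nat -> 'I_n) (t : nat) : \bar R :=
  ereal_inf [set phi s t x | x in [set: 'cV[R]_d]].

(* conditional expectation given F_t: i_t is uniform on {1..n} and
   independent of F_t = sigma(i_0,...,i_{t-1}); all quantities are functions
   of the index sequence, so E_{F_t}[X](s) averages over the value of s t. *)
Definition upd (s : nat -> 'I_n) (t : nat) (i : 'I_n) : nat -> 'I_n :=
  fun k => if k == t then i else s k.

Definition condE (t : nat) (X : (nat -> 'I_n) -> \bar R) (s : nat -> 'I_n)
  : \bar R :=
  ((n%:R)^-1%:E * \sum_(i < n) X (upd s t i))%E.

End SDAPD.

(* Main.v *)
Require Import Defs.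
From HB Require Import structures.
From mathcomp Require Import all_boot all_order all_algebra.
From mathcomp Require Import all_classical all_reals all_analysis.
From mathcomp Require Import ring lra.
Import Order.TTheory GRing.Theory Num.Theory.
Local Open Scope classical_set_scope.
Local Open Scope ring_scope.

Section Vec.
Variable R : realType.
Variable m : nat.
Implicit Types u v w : 'cV[R]_m.

Lemma dotvC u v : dotv u v = dotv v u.
Proof. by apply: eq_bigr => i _; rewrite mulrC. Qed.

Lemma dotvDl u v w : dotv (u + v) w = dotv u w + dotv v w.
Proof. by rewrite /dotv -big_split; apply: eq_bigr => i _; rewrite !mxE mulrDl. Qed.

Lemma dotvBl u v w : dotv (u - v) w = dotv u w - dotv v w.
Proof. by rewrite /dotv -sumrB; apply: eq_bigr => i _; rewrite !mxE mulrBl. Qed.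

Lemma dotvZl a u w : dotv (a *: u) w = a * dotv u w.
Proof. by rewrite /dotv mulr_sumr; apply: eq_bigr => i _; rewrite !mxE mulrA. Qed.

Lemma dotvDr u v w : dotv w (u + v) = dotv w u + dotv w v.
Proof. by rewrite dotvC dotvDl !(dotvC w). Qed.

Lemma dotvBr u v w : dotv w (u - v) = dotv w u - dotv w v.
Proof. by rewrite dotvC dotvBl !(dotvC w). Qed.

Lemma dotvZr a u w : dotv w (a *: u) = a * dotv w u.
Proof. by rewrite dotvC dotvZl dotvC. Qed.

Lemma dotv_suml k (F : nat -> 'cV[R]_m) w :
  dotv (\sum_(j < k) F j) w = \sum_(j < k) dotv (F j) w.
Proof.
elim: k => [|k IH]; first by rewrite !big_ord0 /dotv big1 // => i _; rewrite mxE mul0r.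
by rewrite !big_ord_recr /= dotvDl IH.
Qed.

Lemma sqnormD u v : sqnorm (u + v) = sqnorm u + 2 * dotv u v + sqnorm v.
Proof. rewrite /sqnorm dotvDl !dotvDr (dotvC v u); ring. Qed.

Lemma sqnormB u v : sqnorm (u - v) = sqnorm u - 2 * dotv u v + sqnorm v.
Proof. rewrite /sqnorm dotvBl !dotvBr (dotvC v u); ring. Qed.

Lemma sqnormZ a u : sqnorm (a *: u) = a ^+ 2 * sqnorm u.
Proof. rewrite /sqnorm dotvZl dotvZr; ring. Qed.

Lemma sqnorm_ge0 u : 0 <= sqnorm u.
Proof. by apply: sumr_ge0 => i _; rewrite -expr2 sqr_ge0. Qed.

Lemma coord_le u i j : (u i j) ^+ 2 <= sqnorm u.
Proof.
rewrite (ord1 j) /sqnorm /dotv (bigD1 i) //= -expr2 lerDl.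
by apply: sumr_ge0 => k _; rewrite -expr2 sqr_ge0.
Qed.

Lemma coord_abs_le u i j : `|u i j| <= Num.sqrt (sqnorm u).
Proof. by rewrite -sqrtr_sqr; apply: ler_wsqrtr; apply: coord_le. Qed.

Lemma sqnorm_comb l u v w :
  sqnorm (l *: w + (1 - l) *: v - u) =
  l * sqnorm (w - u) + (1 - l) * sqnorm (v - u) - l * (1 - l) * sqnorm (w - v).
Proof.
have -> : l *: w + (1 - l) *: v - u = (v - u) + l *: (w - v).
  by apply/matrixP => i j; rewrite !mxE; ring.
have -> : w - u = (v - u) + (w - v) by apply/matrixP => i j; rewrite !mxE; ring.
move: (v - u) (w - v) => a b; rewrite !sqnormD sqnormZ dotvZr; ring.
Qed.

End Vec.
Arguments dotvC {R m}.
Arguments dotvDl {R m}.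
Arguments dotvBl {R m}.
Arguments dotvZl {R m}.
Arguments dotvDr {R m}.
Arguments dotvBr {R m}.
Arguments dotvZr {R m}.
Arguments dotv_suml {R m}.
Arguments sqnormD {R m}.
Arguments sqnormB {R m}.
Arguments sqnormZ {R m}.
Arguments sqnorm_ge0 {R m}.
Arguments coord_le {R m}.
Arguments coord_abs_le {R m}.
Arguments sqnorm_comb {R m}.

Lemma dotv_trmx (R : realType) (p q : nat) (A : 'M[R]_(p, q)) (y : 'cV[R]_p) (w : 'cV[R]_q) :
  dotv (A^T *m y) w = dotv y (A *m w).
Proof.
rewrite /dotv.
under eq_bigr do rewrite !mxE big_distrl /=.
rewrite exchange_big /=; apply: eq_bigr => i _.
rewrite !mxE big_distrr /=; apply: eq_bigr => j _; rewrite !mxE; ring.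
Qed.

Lemma sqnorm_shift {R : realType} {m} (a b u : 'cV[R]_m) (del : R) :
  (forall i, `|a i 0 - b i 0| <= del) ->
  sqnorm (b - u) <= sqnorm (a - u) + 2 * del * \sum_i `|b i 0 - u i 0|.
Proof.
move=> H; rewrite /sqnorm /dotv mulr_sumr -big_split /=; apply: ler_sum => i _.
rewrite !mxE.
have h1 := ler_norm ((b i 0 - a i 0) * (b i 0 - u i 0)); rewrite normrM in h1.
have h2 : `|b i 0 - a i 0| <= del by rewrite distrC.
have h3 : `|b i 0 - a i 0| * `|b i 0 - u i 0| <= del * `|b i 0 - u i 0|.
  by rewrite ler_wpM2r.
have h4 := sqr_ge0 (b i 0 - a i 0); clear H; nra.
Qed.


Lemma nbhs_entry {R : realType} {d : nat} (p : 'cV[R^o]_d) (B : set 'cV[R^o]_d) : nbhs p B ->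
  exists2 r : R, 0 < r & forall y : 'cV[R^o]_d, (forall i j, `|p i j - y i j| < r) -> B y.
Proof.
move=> /nbhs_ballP [r r0 H]; exists r => // y Hy; apply: H.
by split => // i j; rewrite /ball /=; exact: Hy.
Qed.

Lemma sc_fin {R : realType} {d : nat} {g : 'cV[R]_d -> \bar R} {mu : R} (gext : ext_valued g) (gsc : strongly_convex mu g) x y l gx gy : 0 <= l -> l <= 1 -> g x = gx%:E -> g y = gy%:E ->
  exists gz, g (l *: x + (1-l) *: y) = gz%:E /\
    gz <= l * gx + (1 - l) * gy - mu / 2 * l * (1 - l) * sqnorm (x - y).
Proof.
move=> l0 l1 Ex Ey; have := gsc x y l l0 l1; rewrite Ex Ey -!EFinM -EFinD.
move: (gext (l *: x + (1 - l) *: y)).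
case: (g _) => [gz| |] //= _; first by rewrite lee_fin => H; exists gz.
Qed.

Lemma g_lb {R : realType} {d : nat} {g : 'cV[R]_d -> \bar R} {mu : R} (mu0 : 0 < mu) (gext : ext_valued g) (gprop : proper_fun g) (gcl : closed_fun g) (gsc : strongly_convex mu g) : exists G0 : R, forall x, (G0%:E <= g x)%E.
Proof.
have [p] := gprop; move: (gext p); case E: (g p) => [gp| |] //= _ _.
set T0 := [set x : 'cV[R^o]_d | (g x <= (gp - 1)%:E)%E].
have : nbhs (p : 'cV[R^o]_d) (~` T0).
  apply: open_nbhs_nbhs; split; first exact: closed_openC (gcl _).
  rewrite /T0 /= E lee_fin => H; clear E; lra.
move=> /nbhs_entry [r0 r0pos Hr0].
set r := Num.min r0 1.
have r_pos : 0 < r by rewrite lt_min r0pos ltr01.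
have r_le1 : r <= 1 by rewrite ge_min lexx orbT.
have r_le_r0 : r <= r0 by rewrite ge_min lexx.
exists (gp - (2 * (mu * r) + 4) / (mu * r ^+ 2)).
move=> x; move: (gext x); case Ex: (g x) => [gx| |] //= _; last by rewrite leey.
rewrite lee_fin.
set N := Num.sqrt (sqnorm (x - p)).
have N0 : 0 <= N := sqrtr_ge0 _.
have NN : N ^+ 2 = sqnorm (x - p) by rewrite sqr_sqrtr // sqnorm_ge0.
set lam := r / (2 * (1 + N)).
have D0 : 0 < 2 * (1 + N) by lra.
have lamD : lam * (2 * (1 + N)) = r by rewrite /lam mulfVK // gt_eqF.
have lam0 : 0 < lam by rewrite /lam divr_gt0.
have lam_half : lam <= 1 / 2 by nra.
have lamN : lam * N < r by nra.
have Hz : ((gp - 1)%:E < g (lam *: x + (1 - lam) *: p)%R)%E.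
  rewrite ltNge; apply/negP.
  apply: (Hr0 (lam *: x + (1 - lam) *: p)) => i j.
  have -> : p i j - (lam *: x + (1 - lam) *: p) i j = - (lam * ((x - p) i j)).
    by rewrite !mxE; ring.
  rewrite normrN normrM (ger0_norm (ltW lam0)).
  apply: (le_lt_trans _ (lt_le_trans lamN r_le_r0)).
  by rewrite ler_wpM2l ?(ltW lam0) // coord_abs_le.
have [gz [Ez Hgz]] := sc_fin gext gsc x p lam gx gp (ltW lam0) ltac:(lra) Ex E.
move: Hz Hgz; rewrite Ez lte_fin -NN => Hz Hgz.
have h0 : 0 <= mu * lam * N ^+ 2 by rewrite mulr_ge0 ?sqr_ge0 // mulr_ge0 // ltW.
have K1 : lam * (gx - gp) > -1 + mu / 4 * lam * N ^+ 2 by nra.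
have K2 : r * (gx - gp) > - (2 * (1 + N)) + mu / 4 * r * N ^+ 2.
  rewrite -lamD; nra.
have mr0 : 0 < mu * r by rewrite mulr_gt0.
have K3 : (mu * r) * (r * (gx - gp)) >= - 2 * (mu * r) - 4.
  have := sqr_ge0 (mu * r * N / 2 - 2); nra.
have Y0 : 0 < mu * r ^+ 2 by rewrite mulr_gt0 // exprn_gt0.
rewrite -(ler_pM2r Y0) mulrBl mulfVK ?gt_eqF //; nra.
Qed.

Lemma g_cases {R : realType} {d : nat} {g : 'cV[R]_d -> \bar R} (gext : ext_valued g) w : g w = +oo%E \/ exists gw, g w = gw%:E.
Proof. by move: (gext w); case: (g w) => [gw| |] //= _; [right; exists gw|left]. Qed.

Definition hh {R : realType} {d : nat} (g : 'cV[R]_d -> \bar R) c u w := (c%:E * g w + (sqnorm (w - u) / 2)%:E)%E.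

Lemma prox_ex {R : realType} {d : nat} {g : 'cV[R]_d -> \bar R} {mu : R} (mu0 : 0 < mu) (gext : ext_valued g) (gprop : proper_fun g) (gcl : closed_fun g) (gsc : strongly_convex mu g) c u : 0 < c -> exists v, forall w, (hh g c u v <= hh g c u w)%E.
Proof.
move=> c0.
have [G0 HG0] := g_lb mu0 gext gprop gcl gsc.
have [p] := gprop; move: (gext p); case Ep: (g p) => [gp| |] //= _ _.
set m := ereal_inf [set hh g c u w | w in [set: 'cV[R]_d]].
have hfin w gw : g w = gw%:E -> hh g c u w = (c * gw + sqnorm (w - u) / 2)%:E.
  by rewrite /hh => ->; rewrite -EFinM -EFinD.
have hinf w : g w = +oo%E -> hh g c u w = +oo%E.
  by rewrite /hh => ->; rewrite gt0_muley ?lte_fin //.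
have hlb w : ((c * G0)%:E <= hh g c u w)%E.
  case: (g_cases gext w) => [/hinf -> | [gw Ew]]; first by rewrite leey.
  rewrite (hfin _ _ Ew) lee_fin.
  have := HG0 w; rewrite Ew lee_fin => h1.
  have h2 := sqnorm_ge0 (w - u).
  have h3 : c * G0 <= c * gw by rewrite ler_wpM2l // ltW.
  clear -h2 h3 c0; nra.
have mlb : ((c * G0)%:E <= m)%E.
  by apply: le_ereal_inf_tmp => _ [w _ <-].
have mub : (m <= hh g c u p)%E by apply: ereal_inf_lbound; exists p.
have mfin : m \is a fin_num.
  rewrite fin_numE; apply/andP; split.
    by apply/negP => /eqP mE; move: mlb; rewrite mE.
  by apply/negP => /eqP mE; move: mub; rewrite mE (hfin _ _ Ep).
set mr := fine m.
have mE : m = mr%:E by rewrite fineK.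
have mlow w gw : g w = gw%:E -> mr <= c * gw + sqnorm (w - u) / 2.
  move=> Ew; rewrite -lee_fin -mE -(hfin _ _ Ew).
  by apply: ereal_inf_lbound; exists w.
pose eps (k : nat) : R := (k.+1%:R)^-1.
have eps0 k : 0 < eps k by rewrite invr_gt0 ltr0n.
have eps1 k : eps k <= 1.
  have h1 : eps k * k.+1%:R = 1 by rewrite mulVf // pnatr_eq0.
  have h2 : 1 <= k.+1%:R :> R by rewrite ler1n.
  have := eps0 k; clear -h1 h2; nra.
have ex_k k : exists x gx, g x = gx%:E /\ c * gx + sqnorm (x - u) / 2 < mr + eps k ^+ 2.
  have : (m < (mr + eps k ^+ 2)%:E)%E.
    by rewrite mE lte_fin ltrDl exprn_gt0.
  move=> /ereal_inf_lt [_ [x _ <-] hx]; exists x.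
  case: (g_cases gext x) => [Ex | [gx Ex]].
    by move: hx; rewrite (hinf _ Ex).
  by exists gx; split => //; move: hx; rewrite (hfin _ _ Ex) lte_fin.
have [xs Hxs] := choice ex_k.
have [gs Hgs] := choice Hxs.
have cauchy k j : sqnorm (xs k - xs j) <= 4 * (eps k ^+ 2 + eps j ^+ 2).
  have [Ek Hk] := Hgs k; have [Ej Hj] := Hgs j.
  have [gz [Ez Hgz]] := sc_fin gext gsc (xs k) (xs j) (1/2) (gs k) (gs j) ltac:(lra) ltac:(lra) Ek Ej.
  have Hm := mlow _ _ Ez.
  rewrite sqnorm_comb in Hm.
  have h1 : c * gz <= c * ((1 / 2) * gs k + (1 - 1 / 2) * gs j
     - mu / 2 * (1 / 2) * (1 - 1 / 2) * sqnorm (xs k - xs j)).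
    by rewrite ler_wpM2l // ltW.
  have h2 : 0 <= c * mu * sqnorm (xs k - xs j).
    by rewrite mulr_ge0 ?sqnorm_ge0 // mulr_ge0 // ltW.
  clear -Hm h1 h2 Hk Hj; nra.
have coord k j i : `|xs k i 0 - xs j i 0| <= 2 * (eps k + eps j).
  have h1 := coord_le (xs k - xs j) i 0; rewrite !mxE in h1.
  have h2 := cauchy k j; have h3 := eps0 k; have h4 := eps0 j.
  rewrite ler_norml; apply/andP; split; clear -h1 h2 h3 h4; nra.
pose E (i : 'I_d) := [set xs k i 0 - 2 * eps k | k in [set: nat]].
pose xl : 'cV[R]_d := \col_i sup (E i).
have xlP k i : `|xs k i 0 - xl i 0| <= 2 * eps k.
  rewrite mxE.
  have ub j : ubound (E i) (xs j i 0 + 2 * eps j).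
    move=> _ [k' _ <-]; have := coord k' j i; rewrite ler_norml => /andP[_ h].
    clear -h; lra.
  have ne : E i !=set0 by exists (xs 0%N i 0 - 2 * eps 0%N); exists 0%N.
  have h1 : xs k i 0 - 2 * eps k <= sup (E i).
    by apply: ub_le_sup; [exists (xs 0%N i 0 + 2 * eps 0%N); exact: ub | exists k].
  have h2 : sup (E i) <= xs k i 0 + 2 * eps k by apply: ge_sup.
  rewrite ler_norml; apply/andP; split; clear -h1 h2; lra.
pose C := \sum_i `|xl i 0 - u i 0|.
have C0 : 0 <= C by apply: sumr_ge0 => i _.
have key e : 0 < e -> (g xl <= ((mr + e - sqnorm (xl - u) / 2) / c)%:E)%E.
  move=> e0; apply: (gcl ((mr + e - sqnorm (xl - u) / 2) / c)).
  move=> B /nbhs_entry [r r0 HB].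
  pose rho := Num.min (r / 4) (Num.min 1 (e / (1 + 2 * C))).
  have rho0 : 0 < rho.
    by rewrite !lt_min divr_gt0 //= ltr01 /= divr_gt0 //; lra.
  have rho1 : rho <= r / 4 by rewrite ge_min lexx.
  have rho2 : rho <= 1 by rewrite !ge_min lexx orbT.
  have rho3 : rho <= e / (1 + 2 * C) by rewrite !ge_min lexx !orbT.
  have rho3' : rho * (1 + 2 * C) <= e by rewrite -ler_pdivlMr //; lra.
  have [k Hk] : exists k, eps k < rho.
    exists (Num.Def.archi_bound (rho^-1)).
    have rinv0 : 0 <= rho^-1 by rewrite invr_ge0 ltW.
    have := archi_boundP rinv0; set K := (_ %:R) => hK.
    have hK1 : K <= (Num.Def.archi_bound (rho^-1)).+1%:R by rewrite /K ler_nat.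
    have e1 : eps (Num.Def.archi_bound (rho^-1)) * (Num.Def.archi_bound (rho^-1)).+1%:R = 1.
      by rewrite mulVf // pnatr_eq0.
    have e2 : rho * rho^-1 = 1 by rewrite mulfV // gt_eqF.
    have h3 : rho * rho^-1 < rho * (Num.Def.archi_bound (rho^-1)).+1%:R.
      by rewrite ltr_pM2l //; apply: (lt_le_trans hK hK1).
    have h4 : 0 < (Num.Def.archi_bound (rho^-1)).+1%:R :> R by rewrite ltr0n.
    rewrite e2 in h3.
    move: e1 h3 h4; set K1 := (_.+1%:R); set ee := eps _ => e1 h3 h4.
    clear -e1 h3 h4; nra.
  exists (xs k); split; last first.
    apply: HB => i j; rewrite (ord1 j) distrC.
    by apply: (le_lt_trans (xlP k i)); clear -Hk rho1 r0; lra.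
  have [Ek Hk'] := Hgs k.
  rewrite /= Ek lee_fin ler_pdivlMr // mulrC.
  have hs := sqnorm_shift (xs k) xl u (2 * eps k) (xlP k); rewrite -/C in hs.
  have := eps0 k; have := eps1 k.
  clear -Hk' hs Hk rho3' rho2 C0 e0; nra.
have [gl El] : exists gl, g xl = gl%:E.
  case: (g_cases gext xl) => [Einf|//]; have := key 1 ltr01.
  by rewrite Einf.
have Hl : c * gl + sqnorm (xl - u) / 2 <= mr.
  apply/ler_addgt0Pr => e e0; have := key e e0; rewrite El lee_fin ler_pdivlMr //.
  clear; lra.
exists xl => w.
have Hw : (m <= hh g c u w)%E by apply: ereal_inf_lbound; exists w.
apply: le_trans Hw; rewrite (hfin _ _ El).
by rewrite mE lee_fin.
Qed.



Lemma prox_growth {R : realType} {d : nat} {g : 'cV[R]_d -> \bar R} {mu : R}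
  (mu0 : 0 < mu) (gext : ext_valued g) (gprop : proper_fun g)
  (gsc : strongly_convex mu g) c u v : 0 < c ->
  (forall w, (hh g c u v <= hh g c u w)%E) ->
  exists gv, g v = gv%:E /\ forall w gw, g w = gw%:E ->
    c * gv + sqnorm (v - u) / 2 + (1 + c * mu) / 2 * sqnorm (w - v)
      <= c * gw + sqnorm (w - u) / 2.
Proof.
move=> c0 Hmin.
have hfin w gw : g w = gw%:E -> hh g c u w = (c * gw + sqnorm (w - u) / 2)%:E.
  by rewrite /hh => ->; rewrite -EFinM -EFinD.
have [gv Ev] : exists gv, g v = gv%:E.
  case: (g_cases gext v) => [Einf|//].
  have [p] := gprop; move: (gext p); case Ep: (g p) => [gp| |] //= _ _.
  have := Hmin p; rewrite (hfin _ _ Ep) /hh Einf gt0_muley ?lte_fin //.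
exists gv; split => // w gw Ew.
set N := sqnorm (w - v).
set D := (c * gw + sqnorm (w - u) / 2) - (c * gv + sqnorm (v - u) / 2).
set k := 1 + c * mu.
have k0 : 0 < k by rewrite /k; have := mulr_gt0 c0 mu0; clear; lra.
have N0 : 0 <= N := sqnorm_ge0 _.
have Hl l : 0 < l -> l < 1 -> (1 - l) * k * N / 2 <= D.
  move=> l0 l1.
  have [gz [Ez Hgz]] := sc_fin gext gsc w v l gw gv (ltW l0) (ltW l1) Ew Ev.
  have := Hmin (l *: w + (1 - l) *: v); rewrite (hfin _ _ Ev) (hfin _ _ Ez) lee_fin.
  rewrite sqnorm_comb -/N => H.
  have h1 : c * gz <= c * (l * gw + (1 - l) * gv - mu / 2 * l * (1 - l) * N).
    by rewrite ler_wpM2l // ltW.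
  have h2 : l * ((1 - l) * k * N / 2) <= l * D.
    rewrite /D /k; clear -H h1; nra.
  by move: h2; rewrite ler_pM2l.
have H12 := Hl (1/2) ltac:(lra) ltac:(lra).
have : k * N / 2 <= D.
  rewrite leNgt; apply/negP => HD.
  have kN0 : 0 < k * N by clear -H12 HD; nra.
  pose l := (k * N / 2 - D) / (k * N).
  have lK : l * (k * N) = k * N / 2 - D by rewrite /l mulfVK // gt_eqF.
  have l0 : 0 < l by rewrite /l divr_gt0 //; clear -HD; lra.
  have l1 : l < 1 by rewrite /l ltr_pdivrMr // mul1r; clear -H12 HD kN0; nra.
  have := Hl l l0 l1; clear -lK HD; nra.
rewrite /D /N /k; clear; lra.
Qed.

Lemma proxv_min {R : realType} {d : nat} {g : 'cV[R]_d -> \bar R} {mu : R}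
  (mu0 : 0 < mu) (gext : ext_valued g) (gprop : proper_fun g) (gcl : closed_fun g)
  (gsc : strongly_convex mu g) c u : 0 < c ->
  forall w, (hh g c u (proxv c g u) <= hh g c u w)%E.
Proof.
move=> c0; rewrite /proxv.
have [v Hv] := prox_ex mu0 gext gprop gcl gsc c u c0.
by apply: (xgetPex 0 (P := fun v => forall w, (hh g c u v <= hh g c u w)%E)); exists v.
Qed.

Lemma arith_core {R : realType} (eta beta kappa mu nu nn gw gb Y0 Y1 Y2 Z1 Z2 Qt Qb Q M RE : R) :
  0 < eta -> 0 < beta -> beta <= eta * kappa -> 0 <= mu -> nu * nn = 1 ->
  0 <= Qt -> 0 <= Qb -> 0 <= Q -> M <= RE ->
  eta * gb + Qb / 2 + eta * nu * (Y2 - Y0) + (1 + eta * mu) / 2 * Q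
    <= eta * gw + Qt / 2 + eta * nu * (Y1 - Y0) ->
  0 <= eta ^+ 2 * M + 2 * eta * (Z1 - Z2) + Q ->
  beta * (gb + nu * (Y2 + nn * Z2)) - RE * beta * eta / 2
    <= kappa / 2 * Qt + beta * (gw + nu * (Y1 + nn * Z1)).
Proof.
move=> e0 b0 bk mu0 nun Qt0 Qb0 Q0 MR Hb Hy.
have hmQ : 0 <= eta * mu * Q by rewrite mulr_ge0 // mulr_ge0 // ltW.
set X := gb - gw + nu * (Y2 - Y1) + Z2 - Z1.
have hX : eta * X <= (Qt + eta ^+ 2 * RE) / 2.
  have h1 : eta ^+ 2 * M <= eta ^+ 2 * RE by rewrite ler_wpM2l // sqr_ge0.
  rewrite /X; clear -Hb Hy hmQ h1 Qb0; nra.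
have hbX : beta * (eta * X) <= beta * ((Qt + eta ^+ 2 * RE) / 2) by rewrite ler_wpM2l // ltW.
have hQ : beta * Qt <= eta * kappa * Qt by rewrite ler_wpM2r.
have goalE : beta * (gb + nu * (Y2 + nn * Z2)) - RE * beta * eta / 2
   - (kappa / 2 * Qt + beta * (gw + nu * (Y1 + nn * Z1)))
   = beta * X - RE * beta * eta / 2 - kappa / 2 * Qt.
  rewrite /X; have -> : nu * (Y2 + nn * Z2) = nu * Y2 + Z2 by rewrite mulrDr mulrA nun mul1r.
  have -> : nu * (Y1 + nn * Z1) = nu * Y1 + Z1 by rewrite mulrDr mulrA nun mul1r.
  ring.
rewrite -subr_le0 goalE.
rewrite -(pmulr_rle0 _ e0).
have -> : eta * (beta * X - RE * beta * eta / 2 - kappa / 2 * Qt)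
  = beta * (eta * X) - beta * (eta ^+ 2 * RE) / 2 - eta * kappa * Qt / 2 by ring.
clear -hbX hQ; nra.
Qed.

Lemma sqnorm_split {R : realType} m (w x0 S : 'cV[R]_m) :
  sqnorm (w - x0) / 2 + dotv S w =
  sqnorm (w - (x0 - S)) / 2 + (dotv x0 S - sqnorm S / 2).
Proof.
have -> : w - (x0 - S) = (w - x0) + S by apply/matrixP => i j; rewrite !mxE; ring.
rewrite [sqnorm (w - x0 + S)]sqnormD dotvBl (dotvC S w); by field.
Qed.

Lemma sqnorm0 {R : realType} m : sqnorm (0 : 'cV[R]_m) = 0.
Proof. by rewrite /sqnorm /dotv big1 // => i _; rewrite mxE mul0r. Qed.

Lemma phi_ident {R : realType} m (w x0 a : 'cV[R]_m) (c gw : R) :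
  sqnorm (w - x0) / 2 + c * gw + dotv a w =
  c * gw + sqnorm (w - (x0 - a)) / 2 + (dotv x0 a - sqnorm a / 2).
Proof. have := sqnorm_split _ w x0 a; lra. Qed.

Lemma lem_addK {R : realType} (a b r K : R) : a + b <= r -> (a + K) + b <= r + K.
Proof. lra. Qed.

Lemma Rbar_bound {R : realType} {n d} (A : 'M[R]_(n, d)) (del : 'cV[R]_n) (i : 'I_n) :
  (forall j, j != i -> del j 0 = 0) -> sqnorm (A^T *m del) <= Rbar A ^+ 2 * sqnorm del.
Proof.
move=> H.
have e1 k : (A^T *m del) k 0 = A i k * del i 0.
  rewrite mxE (bigD1 i) //= big1 ?addr0 ?mxE // => l li; by rewrite mxE (H l li) mulr0.
have e2 : sqnorm del = del i 0 ^+ 2.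
  by rewrite /sqnorm /dotv (bigD1 i) //= big1 ?addr0 ?expr2 // => j ji; rewrite H // mul0r.
have e3 : sqnorm (A^T *m del) = del i 0 ^+ 2 * sqnorm (arow A i).
  rewrite /sqnorm /dotv mulr_sumr; apply: eq_bigr => q _; rewrite e1 /arow !mxE; ring.
have hn : sqnorm (arow A i) <= Rbar A ^+ 2.
  have h1 : norm2 (arow A i) <= Rbar A by rewrite /Rbar; apply: le_bigmax.
  have h0 : 0 <= norm2 (arow A i) := sqrtr_ge0 _.
  have -> : sqnorm (arow A i) = norm2 (arow A i) ^+ 2 by rewrite /norm2 sqr_sqrtr // sqnorm_ge0.
  by rewrite expr2 [X in _ <= X]expr2; apply: ler_pM.
rewrite e3 e2 (mulrC (Rbar A ^+ 2)); apply: ler_wpM2l => //; exact: sqr_ge0.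
Qed.

Lemma expand_v {R : realType} {n d} (A : 'M[R]_(n, d)) (yt : 'cV[R]_n) (z xt : 'cV[R]_d) (e nn : R) :
  sqnorm (z - (xt - (e / nn) *: (A^T *m yt))) = sqnorm (z - xt)
    + 2 * (e * nn^-1 * (dotv yt (A *m z) - dotv yt (A *m xt)))
    + sqnorm ((e / nn) *: (A^T *m yt)).
Proof.
have -> : z - (xt - (e / nn) *: (A^T *m yt)) = (z - xt) + (e / nn) *: (A^T *m yt).
  by apply/matrixP => i j; rewrite !mxE; ring.
rewrite sqnormD dotvZr dotvC dotv_trmx mulmxBr dotvBr.
by [].
Qed.

Lemma young_v {R : realType} {n d} (A : 'M[R]_(n, d)) (del : 'cV[R]_n) (w xb : 'cV[R]_d) (e : R) :
  0 <= e ^+ 2 * sqnorm (A^T *m del) + 2 * e * (dotv del (A *m w) - dotv del (A *m xb))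
        + sqnorm (w - xb).
Proof.
have := sqnorm_ge0 (e *: (A^T *m del) + (w - xb)).
by rewrite [sqnorm (_ + (w - xb))]sqnormD sqnormZ dotvZl dotv_trmx mulmxBr dotvBr mulrA.
Qed.

Lemma hb_conv {R : realType} (eta nu gb gw Qb Q Qt Y0 Y1 Y2 SB mu : R) :
  eta * gb + (Qb + 2 * (eta * nu * (Y2 - Y0)) + SB) / 2 + (1 + eta * mu) / 2 * Q
    <= eta * gw + (Qt + 2 * (eta * nu * (Y1 - Y0)) + SB) / 2 ->
  eta * gb + Qb / 2 + eta * nu * (Y2 - Y0) + (1 + eta * mu) / 2 * Q
    <= eta * gw + Qt / 2 + eta * nu * (Y1 - Y0).
Proof. lra. Qed.

Lemma sub_fin {R : realType} (P L x : R) : P + L <= x -> L <= x - P.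
Proof. lra. Qed.

Section SD.
Variables (R : realType) (n d : nat) (A : 'M[R]_(n, d)) (f : 'I_n -> R -> R)
  (g : 'cV[R]_d -> \bar R) (eta tau : R) (beta : nat -> R)
  (x0 : 'cV[R]_d) (y0 : 'cV[R]_n).

Local Notation st := (state A f g eta tau beta x0 y0).
Local Notation xit := (x_it A f g eta tau beta x0 y0).
Local Notation yit := (y_it A f g eta tau beta x0 y0).
Local Notation xbit := (xbar_it A f g eta tau beta x0 y0).
Local Notation ybit := (ybar_it A f g eta tau beta x0 y0).
Local Notation ph := (phi A f g eta tau beta x0 y0).
Local Notation phs := (phistar A f g eta tau beta x0 y0).

Lemma state_S s t : (st s t).2 = \sum_(k < t) beta k *: ybit s k.
Proof.
elim: t => [|t IH]; first by rewrite big_ord0.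
rewrite big_ord_recr /= -IH /ybar_it /x_it /y_it.
by case: (st s t) => [[xt yt] St].
Qed.

Lemma x_it0 s : xit s 0 = x0. Proof. by []. Qed.

Lemma x_it_S s t : xit s t.+1 = proxv (Bsum beta t.+1) g
  (x0 - (n%:R)^-1 *: (A^T *m (\sum_(k < t.+1) beta k *: ybit s k))).
Proof.
rewrite -state_S /x_it /=.
by case: (st s t) => [[xt yt] St].
Qed.

Lemma y_it_S s t : yit s t.+1 = y_of A f g eta tau (s t) (xit s t) (yit s t).
Proof. by rewrite /y_it /x_it /=; case: (st s t) => [[xt yt] St]. Qed.

Lemma phi_S s t x : ph s t.+1 x =
  (ph s t x + (beta t)%:E * (g x + ((n%:R)^-1 * dotv (ybit s t) (A *m x))%:E))%E.
Proof. by rewrite /phi big_ord_recr /= addeA. Qed.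

Lemma phi_fin s t x gx : g x = gx%:E -> ph s t x =
  (sqnorm (x - x0) / 2 + Bsum beta t * gx
    + dotv ((n%:R)^-1 *: (A^T *m (\sum_(k < t) beta k *: ybit s k))) x)%:E.
Proof.
move=> Ex; rewrite /phi Ex.
under eq_bigr do rewrite -EFinD -EFinM.
rewrite sumEFin -EFinD; congr (_%:E).
rewrite -addrA; congr (_ + _).
rewrite dotvZl dotv_trmx (dotv_suml t (fun k => beta k *: ybit s k)) /Bsum big_distrl mulr_sumr -big_split /=.
by apply: eq_bigr => k _; rewrite dotvZl; ring.
Qed.

Lemma phi_inf s t x : (0 < t)%N -> (forall k, 0 < beta k) -> g x = +oo%E -> ph s t x = +oo%E.
Proof.
case: t => // t _ b0 Ex; rewrite phi_S Ex.
have -> : (+oo + ((n%:R)^-1 * dotv (ybit s t) (A *m x))%:E)%E = +oo%E by [].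
rewrite gt0_muley ?lte_fin // addey //.
rewrite /phi Ex; apply/negP => /eqP H.
have : (0 <= (sqnorm (x - x0) / 2)%:E + \sum_(k < t) (beta k)%:E *
   (+oo + ((n%:R)^-1 * dotv (ybit s k) (A *m x))%:E))%E.
  apply: adde_ge0; first by rewrite lee_fin divr_ge0 // sqnorm_ge0.
  apply: sume_ge0 => k _; rewrite gt0_muley ?lte_fin //.
by rewrite H.
Qed.


Lemma Bsum_ge0 t : (forall k, 0 < beta k) -> 0 <= Bsum beta t.
Proof. by move=> b0; apply: sumr_ge0 => k _; apply: ltW. Qed.

Lemma phi_lb mu (mu0 : 0 < mu) (gext : ext_valued g) (gprop : proper_fun g)
  (gcl : closed_fun g) (gsc : strongly_convex mu g) (bpos : forall k, 0 < beta k) s t :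
  exists P : R, phs s t = P%:E /\
    forall w, ((P + (1 + Bsum beta t * mu) / 2 * sqnorm (w - xit s t))%:E <= ph s t w)%E.
Proof.
have k0 : 0 <= (1 + Bsum beta t * mu) / 2.
  by rewrite divr_ge0 // addr_ge0 // mulr_ge0 ?Bsum_ge0 // ltW.
suff [P [HPx Hlb]] : exists P, ph s t (xit s t) = P%:E /\
    forall w, ((P + (1 + Bsum beta t * mu) / 2 * sqnorm (w - xit s t))%:E <= ph s t w)%E.
  exists P; split => //; apply/eqP; rewrite eq_le; apply/andP; split.
    by apply: ereal_inf_lbound; exists (xit s t).
  apply: le_ereal_inf_tmp => _ [w _ <-]; apply: le_trans (Hlb w).
  by rewrite lee_fin lerDl mulr_ge0 // sqnorm_ge0.
case: t k0 => [|t] k0.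
  exists 0; split.
    by rewrite x_it0 /phi big_ord0 adde0 subrr sqnorm0 mul0r.
  move=> w; rewrite x_it0 /phi big_ord0 adde0 lee_fin /Bsum big_ord0.
  by rewrite mul0r addr0 add0r div1r mulrC.
set c := Bsum beta t.+1.
have c0 : 0 < c by rewrite /c /Bsum big_ord_recr /= ltr_wpDl // sumr_ge0 // => k _; apply: ltW.
set S := \sum_(k < t.+1) beta k *: ybit s k.
set a := (n%:R)^-1 *: (A^T *m S).
set u := x0 - a.
have xE : xit s t.+1 = proxv c g u by rewrite x_it_S.
have Hmin := proxv_min mu0 gext gprop gcl gsc c u c0.
rewrite -xE in Hmin.
have [gv [Ev Hg]] := prox_growth mu0 gext gprop gsc c u (xit s t.+1) c0 Hmin.
set K := dotv x0 a - sqnorm a / 2.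
have phE w gw : g w = gw%:E -> ph s t.+1 w = (c * gw + sqnorm (w - u) / 2 + K)%:E.
  by move=> Ew; rewrite (phi_fin _ _ _ _ Ew) -/S -/a -/c phi_ident.
exists (c * gv + sqnorm (xit s t.+1 - u) / 2 + K); split; first exact: phE.
move=> w; case: (g_cases gext w) => [Ew | [gw Ew]].
  by rewrite phi_inf // leey.
rewrite (phE _ _ Ew) lee_fin; apply: lem_addK; exact: Hg.
Qed.


Lemma pointwise mu (mu0 : 0 < mu) (gext : ext_valued g) (gprop : proper_fun g)
  (gcl : closed_fun g) (gsc : strongly_convex mu g) (bpos : forall k, 0 < beta k)
  (eta0 : 0 < eta) (n0 : (0 < n)%N) t
  (hstep : eta * (1 + Bsum beta t * mu) >= beta t) s :
  exists yv : R, (g (xbit s t) + ((n%:R)^-1 * dotv (ybit s t) (A *m xbit s t))%:E)%E = yv%:E /\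
  ((beta t * yv - Rbar A ^+ 2 * beta t * eta / 2 * sqnorm (yit s t.+1 - yit s t))%:E
     <= phs s t.+1 - phs s t)%E.
Proof.
have [P [HP Hlb]] := phi_lb _ mu0 gext gprop gcl gsc bpos s t.
set xt := xit s t; set yt := yit s t; set i := s t.
set v' := xt - (eta / n%:R) *: (A^T *m yt).
have xbE : xbit s t = proxv eta g v' by [].
have Hmin := proxv_min mu0 gext gprop gcl gsc eta v' eta0.
rewrite -xbE in Hmin.
have [gb [Eb Hb]] := prox_growth mu0 gext gprop gsc eta v' (xbit s t) eta0 Hmin.
set xb := xbit s t; set yh := ybit s t; set y1 := yit s t.+1.
have y1E : y1 = y_of A f g eta tau i xt yt by rewrite /y1 y_it_S.
have yhE : yh = yt + n%:R *: (y1 - yt) by rewrite /yh /ybar_it y1E.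
set del := y1 - yt.
have del0 j : j != i -> del j 0 = 0.
  by move=> ji; rewrite /del y1E !mxE (negbTE ji) subrr.
exists (gb + (n%:R)^-1 * dotv yh (A *m xb)); split; first by rewrite Eb -EFinD.
set L := _ - _.
have nun : (n%:R)^-1 * n%:R = 1 :> R by rewrite mulVf // pnatr_eq0 -lt0n.
have Hlow w : ((P + L)%:E <= ph s t.+1 w)%E.
  rewrite phi_S; case: (g_cases gext w) => [Ew | [gw Ew]].
    rewrite Ew.
    have -> : (+oo + ((n%:R)^-1 * dotv (ybit s t) (A *m w))%:E)%E = +oo%E by [].
    rewrite gt0_muley ?lte_fin // addey ?leey //.
    apply/negP => /eqP H; have := Hlb w; by rewrite H.
  rewrite Ew -EFinD -EFinM.
  apply: le_trans (leeD (Hlb w) (lexx _)); rewrite -EFinD lee_fin -addrA lerD2l.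
  rewrite /L -/yh yhE !dotvDl !dotvZl -/del.
  have -> : Rbar A ^+ 2 * beta t * eta / 2 * sqnorm del
      = (Rbar A ^+ 2 * sqnorm del) * beta t * eta / 2 by ring.
  apply: (arith_core _ _ _ mu _ _ _ _ (dotv yt (A *m xt)) _ _ _ _ _
     (sqnorm (xb - xt)) (sqnorm (w - xb)) (sqnorm (A^T *m del))) => //.
  - exact: ltW.
  - exact: sqnorm_ge0.
  - exact: sqnorm_ge0.
  - exact: sqnorm_ge0.
  - exact: (Rbar_bound A del i del0).
  - apply: hb_conv; have := Hb w gw Ew; rewrite /v' !expand_v; exact.
  - exact: young_v.
have Hge : ((P + L)%:E <= phs s t.+1)%E.
  by apply: le_ereal_inf_tmp => _ [w _ <-]; exact: Hlow.
rewrite HP; move: Hge; case: (phs s t.+1) => [x| |] //.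
  by rewrite -EFinB !lee_fin; exact: sub_fin.
by move=> _; rewrite leey.
Qed.

End SD.

Theorem lemma3p2 (R : realType) (n d : nat) (A : 'M[R]_(n, d))
  (f : 'I_n -> R -> R) (g : 'cV[R]_d -> \bar R)
  (gamma mu eta tau : R) (beta : nat -> R)
  (x0 : 'cV[R]_d) (y0 : 'cV[R]_n) (t : nat) (s : nat -> 'I_n) :
  (0 < n)%N ->
  0 < gamma -> 0 < mu -> 0 < eta -> 0 < tau -> (forall k, 0 < beta k) ->
  (forall i, convex_fun (f i)) ->
  (forall i, smooth_fun gamma^-1 (f i)) ->
  ext_valued g -> proper_fun g -> closed_fun g -> strongly_convex mu g ->
  eta * (1 + Bsum beta t * mu) >= beta t ->
  (condE t (fun s' =>
      phistar A f g eta tau beta x0 y0 s' t.+1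
      - phistar A f g eta tau beta x0 y0 s' t) s >=
   (beta t)%:E *
     condE t (fun s' =>
        g (xbar_it A f g eta tau beta x0 y0 s' t)
        + ((n%:R)^-1 * dotv (ybar_it A f g eta tau beta x0 y0 s' t)
                        (A *m xbar_it A f g eta tau beta x0 y0 s' t))%:E) s
   - ((Rbar A ^+ 2 * beta t * eta / 2)%:E *
      condE t (fun s' =>
        (sqnorm (y_it A f g eta tau beta x0 y0 s' t.+1
                 - y_it A f g eta tau beta x0 y0 s' t))%:E) s))%E.
Proof.
move=> n0 gam0 mu0 eta0 tau0 bpos fconv fsm gext gprop gcl gsc hstep.
have H (i : 'I_n) := pointwise _ _ _ A f g eta tau beta x0 y0 _ mu0 gext gprop gcl gsc bpos eta0 n0 t hstep (upd s t i).
have [yv Hyv] := choice H.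
rewrite /condE /=.
under eq_bigr => i _ do rewrite (proj1 (Hyv i)).
rewrite !sumEFin -!EFinM -EFinB.
apply: le_trans (lee_wpmul2l _ (lee_sum _ (fun i _ => proj2 (Hyv i)))); last first.
  by rewrite lee_fin invr_ge0.
rewrite sumEFin -EFinM lee_fin sumrB -!mulr_sumr.
rewrite le_eqVlt; apply/orP; left; apply/eqP; ring.
Qed.
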